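(* Let Knapsack be the parameterised query whose inputs are $n$ items with profits $p_1,\dots,p_n$ and weights $w_1,\dots,w_n$, a capacity bound $B$ and a profit threshold $T$ (all natural numbers given as $n$-bit numbers), with parameter $B$, asking whether there is $S\subseteq[n]$ with $\sum_{i\in S}p_i\ge T$ and $\sum_{i\in S}w_i\le B$. Let $\Delta_{\mathrm{KS}}$ be the set of change operations that arbitrarily replace the profit and the weight of one item, and that set $B$ or $T$ to any value. Then $(\mathrm{Knapsack},\Delta_{\mathrm{KS}})\in\mathrm{ParaSD}$.
   Context: Encoding: the domain is $[n]$; a binary relation $P$ with $(i,j)\in P$ iff the $j$-th bit of $p_i$ is $1$, analogously a binary relation $W$ for the weights, and unary relations $B$, $T$ for the bits of $B$ and $T$. The parameter $B$ may be any value up to $2^n-1$. $\mathrm{FO}{+}\mathrm{ar}$: order-invariant first-order logic with access to a linear order and compatible addition and multiplication. An advice is a computable map $\pi$ from $\mathbb{N}$ to structures over a fixed schema. A dynamic program with advice $(P,\pi)$ has auxiliary relations including a query relation and, for every change operation and auxiliary relation, an update $\mathrm{FO}{+}\mathrm{ar}$ formula over input, auxiliary and advice schema (with change parameters as free variables); states are $(D\uplus D_{\mathrm{adv}},\mathcal{I},\mathcal{A},\pi(k_{\max}))$ with arithmetic on $D\uplus D_{\mathrm{adv}}$ and auxiliary relations over $D\uplus D_{\mathrm{adv}}$; after a change each auxiliary relation is replaced by the result of its update formula on the old state. $(Q,\kappa,\Delta)\in\mathrm{ParaSD}$ if for some computable $f$ there is such a program with $|\pi(k)|\le f(k)$ for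 all $k$ such that, for every empty initial input, every $k_{\max}$ and every change sequence over $\Delta$ keeping the parameter at most $k_{\max}$ after every prefix, the query relation (starting from empty auxiliary relations and advice $\pi(k_{\max})$) equals the query answer on the current input. *)

(* Defs.v *)
From mathcomp Require Import all_boot.

Set Implicit Arguments.
Unset Strict Implicit.
Unset Printing Implicit Defensive.

Inductive recf : Type :=
| RZero
| RSucc
| RProj (i : nat)
| RComp (f : recf) (gs : seq recf)
| RPrec (f g : recf)
| RMu (f : recf).

Inductive reval : recf -> seq nat -> nat -> Prop :=
| ev_zero xs : reval RZero xs 0
| ev_succ x xs : reval RSucc (x :: xs) x.+1
| ev_proj i xs : i < size xs -> reval (RProj i) xs (nth 0 xs i)
| ev_comp f gs xs ys y :
    revals gs xs ys -> reval f ys y -> reval (RComp f gs) xs y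
| ev_prec0 f g xs y : reval f xs y -> reval (RPrec f g) (0 :: xs) y
| ev_precS f g m xs r y :
    reval (RPrec f g) (m :: xs) r -> reval g (m :: r :: xs) y ->
    reval (RPrec f g) (m.+1 :: xs) y
| ev_mu f xs y :
    reval f (y :: xs) 0 ->
    (forall z, z < y -> exists v, 0 < v /\ reval f (z :: xs) v) ->
    reval (RMu f) xs y
with revals : seq recf -> seq nat -> seq nat -> Prop :=
| evs_nil xs : revals [::] xs [::]
| evs_cons g gs xs y ys :
    reval g xs y -> revals gs xs ys -> revals (g :: gs) xs (y :: ys).

Definition computable1 (F : nat -> nat) : Prop :=
  exists c : recf, forall x, reval c [:: x] (F x).

Definition computable_rel (a : nat) (F : nat -> seq nat -> bool) : Prop :=
  exists c : recf, forall k t, size t = a -> reval c (k :: t) (nat_of_bool (F k t)).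

Definition bitn (m j : nat) : bool := odd (m %/ 2 ^ j).

(* profits p, weights w (of the items 0..n-1), capacity B, threshold T *)
Record ksinst := KSInst {
  ks_p : nat -> nat;
  ks_w : nat -> nat;
  ks_B : nat;
  ks_T : nat }.

(* the empty input: all relations P, W, B, T empty, i.e. all numbers 0 *)
Definition ks_empty : ksinst := KSInst (fun _ => 0) (fun _ => 0) 0 0.

Definition knapsack (n : nat) (I : ksinst) : bool :=
  [exists S : {set 'I_n},
     (ks_T I <= \sum_(i in S) ks_p I i) && (\sum_(i in S) ks_w I i <= ks_B I)].

Definition ks_param (I : ksinst) : nat := ks_B I.

(* input schema: binary P, W and unary B, T *)
Inductive isym := SP | SW | SB | ST.

Definition inp_rel (n : nat) (I : ksinst) (s : isym) (vs : seq nat) : bool :=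
  match s, vs with
  | SP, [:: i; j] => [&& i < n, j < n & bitn (ks_p I i) j]
  | SW, [:: i; j] => [&& i < n, j < n & bitn (ks_w I i) j]
  | SB, [:: j] => (j < n) && bitn (ks_B I) j
  | ST, [:: j] => (j < n) && bitn (ks_T I) j
  | _, _ => false
  end.

Inductive change (n : nat) : Type :=
| CItem (i : 'I_n) (p w : nat)
| CB (b : nat)
| CT (t : nat).

Definition valid_change (n : nat) (c : change n) : bool :=
  match c with
  | CItem _ p w => (p < 2 ^ n) && (w < 2 ^ n)
  | CB b => b < 2 ^ n
  | CT t => t < 2 ^ n
  end.

Definition apply_change (n : nat) (c : change n) (I : ksinst) : ksinst :=
  match c with
  | CItem i p w =>
      KSInst (fun j => if j == val i then p else ks_p I j)
             (fun j => if j == val i then w else ks_w I j) (ks_B I) (ks_T I)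
  | CB b => KSInst (ks_p I) (ks_w I) b (ks_T I)
  | CT t => KSInst (ks_p I) (ks_w I) (ks_B I) t
  end.

Definition run_input (n : nat) (cs : seq (change n)) : ksinst :=
  foldl (fun I c => apply_change c I) ks_empty cs.

(* kinds of change operations (one update formula per kind and aux relation) *)
Inductive ckind := KItem | KB | KT.

Definition change_kind (n : nat) (c : change n) : ckind :=
  match c with CItem _ _ _ => KItem | CB _ => KB | CT _ => KT end.

(* element parameters (become free variables 0, 1, ...) *)
Definition change_elems (n : nat) (c : change n) : seq nat :=
  match c with CItem i _ _ => [:: val i] | _ => [::] end.

(* number-valued parameters (n-bit numbers, accessed bitwise) *)
Definition change_nums (n : nat) (c : change n) : seq nat :=
  match c with CItem _ p w => [:: p; w] | CB b => [:: b] | CT t => [:: t] end.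

Inductive form : Type :=
| FTrue
| FEq (x y : nat)
| FLt (x y : nat)
| FAdd (x y z : nat)
| FMul (x y z : nat)
| FInp (s : isym) (xs : seq nat)
| FAux (r : nat) (xs : seq nat)
| FAdv (r : nat) (xs : seq nat)
| FPar (k : nat) (x : nat)        (* bit x of the k-th numeric change parameter *)
| FNot (f : form)
| FAnd (f g : form)
| FOr (f g : form)
| FEx (x : nat) (f : form)
| FAll (x : nat) (f : form).

Record advice := Advice {
  adv_size : nat;
  adv_rel : nat -> seq nat -> bool }.

Record dynprog := DynProg {
  aux_ar : seq nat;                  (* arities of the auxiliary relations;
                                        relation 0 is the query relation *)
  adv_ar : seq nat;
  upd : ckind -> nat -> form }.

Definition wf_prog (P : dynprog) : bool :=
  (0 < size (aux_ar P)) && (nth 0 (aux_ar P) 0 == 0).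

Definition upd_env (env : nat -> nat) (x v : nat) : nat -> nat :=
  fun y => if y == x then v else env y.

(* Universe D (+) D_adv = {0,..,n + adv_size - 1}: input elements first
   (element j of [n] is the number j), advice element a is the number n + a. *)
Fixpoint holds (P : dynprog) (n : nat) (adv : advice) (I : ksinst)
    (A : nat -> seq nat -> bool) (par : seq nat) (env : nat -> nat)
    (f : form) : bool :=
  let N := n + adv_size adv in
  match f with
  | FTrue => true
  | FEq x y => env x == env y
  | FLt x y => env x < env y
  | FAdd x y z => env x + env y == env z
  | FMul x y z => env x * env y == env z
  | FInp s xs => inp_rel n I s (map env xs)
  | FAux r xs =>
      let vs := map env xs in
      [&& r < size (aux_ar P), size vs == nth 0 (aux_ar P) r,
          all (fun v => v < N) vs & A r vs]
  | FAdv r xs =>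
      let vs := map env xs in
      [&& r < size (adv_ar P), size vs == nth 0 (adv_ar P) r,
          all (fun v => (n <= v) && (v < N)) vs &
          adv_rel adv r (map (fun v => v - n) vs)]
  | FPar k x => bitn (nth 0 par k) (env x)
  | FNot g => ~~ holds P n adv I A par env g
  | FAnd g h => holds P n adv I A par env g && holds P n adv I A par env h
  | FOr g h => holds P n adv I A par env g || holds P n adv I A par env h
  | FEx x g => has (fun v => holds P n adv I A par (upd_env env x v) g) (iota 0 N)
  | FAll x g => all (fun v => holds P n adv I A par (upd_env env x v) g) (iota 0 N)
  end.

Definition pstate := (ksinst * (nat -> seq nat -> bool))%type.

Definition empty_aux : nat -> seq nat -> bool := fun _ _ => false.

(* one change: every auxiliary relation r of arity a becomes
   { v in U^a | upd (kind c) r holds on the OLD state, with the element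
     change parameters as variables 0..l-1 and v as variables l..l+a-1 } *)
Definition step (P : dynprog) (n : nat) (adv : advice) (st : pstate)
    (c : change n) : pstate :=
  let I := st.1 in
  let A := st.2 in
  let N := n + adv_size adv in
  (apply_change c I,
   fun r vs =>
     [&& r < size (aux_ar P), size vs == nth 0 (aux_ar P) r,
         all (fun v => v < N) vs &
         holds P n adv I A (change_nums c)
               (fun x => nth 0 (change_elems c ++ vs) x) (upd P (change_kind c) r)]).

Definition run (P : dynprog) (n : nat) (adv : advice) (cs : seq (change n)) : pstate :=
  foldl (@step P n adv) (ks_empty, empty_aux) cs.

Definition query_rel (st : pstate) : bool := st.2 0 [::].

Definition advice_computable (P : dynprog) (pi : nat -> advice) : Prop :=
  computable1 (fun k => adv_size (pi k)) /\
  forall r, r < size (adv_ar P) ->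
    computable_rel (nth 0 (adv_ar P) r)
      (fun k t => all (fun v => v < adv_size (pi k)) t && adv_rel (pi k) r t).

Definition ks_correct (P : dynprog) (pi : nat -> advice) : Prop :=
  forall (n kmax : nat) (cs : seq (change n)),
    cs <> [::] ->
    all (@valid_change n) cs ->
    (forall m, m <= size cs -> ks_param (run_input (take m cs)) <= kmax) ->
    query_rel (@run P n (pi kmax) cs) = knapsack n (run_input cs).

Definition knapsack_in_ParaSD : Prop :=
  exists f : nat -> nat, computable1 f /\
  exists (P : dynprog) (pi : nat -> advice),
    [/\ wf_prog P, advice_computable P pi,
        (forall k, adv_size (pi k) <= f k) & ks_correct P pi].

(* Main.v *)
Require Import Defs.
From mathcomp Require Import all_boot zify.
Set Implicit Arguments. Unset Strict Implicit. Unset Printing Implicit Defensive.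

Definition one0 := RComp RSucc [:: RZero].
Lemma ev_one0 xs : reval one0 xs 1.
Proof. apply: (ev_comp (ys := [:: 0])); [apply: evs_cons; [exact: ev_zero| exact: evs_nil] | exact: ev_succ]. Qed.

Lemma ev_proj0 x xs : reval (RProj 0) (x :: xs) x.
Proof. exact: (ev_proj (xs := x :: xs) (i := 0)). Qed.
Lemma ev_proj1 x y xs : reval (RProj 1) (x :: y :: xs) y.
Proof. exact: (ev_proj (xs := x :: y :: xs) (i := 1)). Qed.
Lemma ev_proj2 x y z xs : reval (RProj 2) (x :: y :: z :: xs) z.
Proof. exact: (ev_proj (xs := x :: y :: z :: xs) (i := 2)). Qed.

Lemma ev_comp1 f g xs y z : reval g xs y -> reval f [:: y] z -> reval (RComp f [:: g]) xs z.
Proof. move=> H1 H2; apply: (ev_comp (ys := [:: y])) => //; apply: evs_cons => //; exact: evs_nil. Qed.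
Lemma ev_comp2 f g1 g2 xs y1 y2 z : reval g1 xs y1 -> reval g2 xs y2 -> reval f [:: y1; y2] z ->
  reval (RComp f [:: g1; g2]) xs z.
Proof. move=> H1 H2 H3; apply: (ev_comp (ys := [:: y1; y2])) => //; do 2 apply: evs_cons => //; exact: evs_nil. Qed.

Lemma ev_prec f g xs (F : nat -> nat) :
  reval f xs (F 0) -> (forall m, reval g (m :: F m :: xs) (F m.+1)) ->
  forall m, reval (RPrec f g) (m :: xs) (F m).
Proof. move=> H0 HS; elim=> [|m IH]; first exact: ev_prec0. exact: ev_precS IH (HS m). Qed.

Definition addc := RPrec (RProj 0) (RComp RSucc [:: RProj 1]).
Lemma ev_add x y : reval addc [:: x; y] (x + y).
Proof. apply: (ev_prec (F := fun m => m + y)); first exact: ev_proj0.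
move=> m; apply: ev_comp1; [exact: ev_proj1| exact: ev_succ]. Qed.

Definition predc := RPrec RZero (RProj 0).
Lemma ev_pred x : reval predc [:: x] x.-1.
Proof. apply: (ev_prec (F := fun m => m.-1)); first exact: ev_zero. move=> m; exact: ev_proj0. Qed.

Definition subc := RPrec (RProj 0) (RComp predc [:: RProj 1]).
Lemma ev_sub y x : reval subc [:: y; x] (x - y).
Proof. apply: (ev_prec (F := fun m => x - m)); first by rewrite subn0; exact: ev_proj0.
move=> m; apply: ev_comp1; first exact: ev_proj1. rewrite subnS; exact: ev_pred. Qed.

Definition iszc := RPrec one0 RZero.
Lemma ev_isz x : reval iszc [:: x] (nat_of_bool (x == 0)).
Proof. apply: (ev_prec (F := fun m => nat_of_bool (m == 0))); first exact: ev_one0.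
move=> m; exact: ev_zero. Qed.

Definition lec := RComp iszc [:: RComp subc [:: RProj 1; RProj 0]].
Lemma ev_le x y : reval lec [:: x; y] (nat_of_bool (x <= y)).
Proof. apply: ev_comp1; last exact: ev_isz.
apply: ev_comp2; [exact: ev_proj1| exact: ev_proj0| exact: ev_sub]. Qed.

Definition mulc := RPrec RZero (RComp addc [:: RProj 1; RProj 2]).
Lemma ev_mul x y : reval mulc [:: x; y] (x * y).
Proof. apply: (ev_prec (F := fun m => m * y)); first exact: ev_zero.
move=> m; apply: (ev_comp2 (y1 := m * y) (y2 := y)); [exact: ev_proj1| exact: ev_proj2|]. rewrite mulSn addnC; exact: ev_add. Qed.

Definition oddc := RPrec RZero (RComp iszc [:: RProj 1]).
Lemma ev_odd x : reval oddc [:: x] (nat_of_bool (odd x)).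
Proof. apply: (ev_prec (F := fun m => nat_of_bool (odd m))); first exact: ev_zero.
move=> m; apply: ev_comp1; first exact: ev_proj1.
have -> : nat_of_bool (odd m.+1) = nat_of_bool (nat_of_bool (odd m) == 0) by rewrite /=; case: (odd m).
exact: ev_isz. Qed.

Definition halfc := RPrec RZero (RComp addc [:: RProj 1; RComp oddc [:: RProj 0]]).
Lemma ev_half x : reval halfc [:: x] x./2.
Proof. apply: (ev_prec (F := fun m => m./2)); first exact: ev_zero.
move=> m; apply: ev_comp2; [exact: ev_proj1| apply: ev_comp1; [exact: ev_proj0| exact: ev_odd]|].
have -> : m.+1./2 = m./2 + odd m by rewrite /= uphalf_half addnC.
exact: ev_add. Qed.

Definition iterhalf := RPrec (RProj 0) (RComp halfc [:: RProj 1]).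
Lemma ev_iterhalf j a : reval iterhalf [:: j; a] (a %/ 2 ^ j).
Proof. apply: (ev_prec (F := fun m => a %/ 2 ^ m)); first by rewrite expn0 divn1; exact: ev_proj0.
move=> m; apply: ev_comp1; first exact: ev_proj1.
by rewrite expnS mulnC divnMA divn2; exact: ev_half. Qed.

Definition bitc := RComp oddc [:: RComp iterhalf [:: RProj 1; RProj 0]].
Lemma ev_bit a j : reval bitc [:: a; j] (nat_of_bool (bitn a j)).
Proof. apply: ev_comp1; last exact: ev_odd.
apply: ev_comp2; [exact: ev_proj1| exact: ev_proj0| exact: ev_iterhalf]. Qed.

Fixpoint Erec (G Pr : nat -> bool) (q : nat) : bool :=
  if q is q'.+1 then G q' || (Pr q' && Erec G Pr q') else false.

Lemma ErecP (G Pr : nat -> bool) q :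
  reflect (exists r, [/\ r < q, G r & forall t, r < t -> t < q -> Pr t]) (Erec G Pr q).
Proof.
elim: q => [|q IH] /=.
  by apply: ReflectF => -[r []].
apply: (iffP idP).
  case/orP => [Gq|/andP[Pq /IH [r [rq Gr Hr]]]].
    by exists q; split => // t qt tq; rewrite ltnS leqNgt qt in tq.
  exists r; split => //; first by apply: ltnW.
  move=> t rt; rewrite ltnS leq_eqVlt => /orP[/eqP->//|]; exact: Hr.
move=> [r [rq Gr Hr]]; apply/orP.
move: rq; rewrite ltnS leq_eqVlt => /orP[/eqP Er|rq]; first by left; rewrite -Er.
right; apply/andP; split; first exact: Hr.
by apply/IH; exists r; split => // t rt tq; apply: Hr => //; apply: ltnW.
Qed.

Lemma bitn_mod a q : a %% 2 ^ q.+1 = a %% 2 ^ q + bitn a q * 2 ^ q.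
Proof.
set d := a %/ 2 ^ q.
have Ha : a = d %/ 2 * 2 ^ q.+1 + (odd d * 2 ^ q + a %% 2 ^ q).
  have e1 := divn_eq a (2 ^ q); have e2 := divn_eq d 2; rewrite modn2 in e2.
  rewrite -/d in e1; rewrite expnS; move: e1 e2; set X := 2 ^ q; set h := d %/ 2.
  set o := nat_of_bool (odd d); set r := a %% X; nia.
rewrite {1}Ha modnMDl modn_small; first by rewrite addnC.
have := ltn_pmod a (expn_gt0 2 q); rewrite expnS; case: (odd d) => /=; lia.
Qed.

Lemma pow_gt0 q : 0 < 2 ^ q. Proof. exact: expn_gt0. Qed.

Lemma carryE a c q :
  (2 ^ q <= a %% 2 ^ q + c %% 2 ^ q) =
  Erec (fun r => bitn a r && bitn c r) (fun r => bitn a r || bitn c r) q.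
Proof.
elim: q => [|q IH] /=; first by rewrite expn0 !modn1.
rewrite !bitn_mod -IH expnS.
have := ltn_pmod a (pow_gt0 q); have := ltn_pmod c (pow_gt0 q).
have := pow_gt0 q.
case: (bitn a q); case: (bitn c q) => /=; lia.
Qed.

Lemma bit_add a c q :
  bitn (a + c) q = bitn a q (+) bitn c q (+) (2 ^ q <= a %% 2 ^ q + c %% 2 ^ q).
Proof.
rewrite /bitn.
have ea := divn_eq a (2 ^ q); have ec := divn_eq c (2 ^ q).
have la := ltn_pmod a (pow_gt0 q); have lc := ltn_pmod c (pow_gt0 q).
move: ea ec la lc; set X := 2 ^ q; set ra := a %% X; set rc := c %% X.
set da := a %/ X; set dc := c %/ X => ea ec la lc.
have H : a + c = (da + dc + (X <= ra + rc)) * X + (ra + rc - (X <= ra + rc) * X).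
  case E: (X <= ra + rc) => /=; nia.
rewrite H divnMDl ?pow_gt0 // divn_small; last by case E: (X <= ra + rc) => /=; lia.
by rewrite addn0 !oddD; case: (X <= _).
Qed.

Lemma ltE a c q :
  (c %% 2 ^ q < a %% 2 ^ q) =
  Erec (fun r => bitn a r && ~~ bitn c r) (fun r => bitn a r == bitn c r) q.
Proof.
elim: q => [|q IH] /=; first by rewrite expn0 !modn1.
rewrite !bitn_mod -IH.
have := ltn_pmod a (pow_gt0 q); have := ltn_pmod c (pow_gt0 q).
have := pow_gt0 q.
move: (c %% 2 ^ q) (a %% 2 ^ q) (2 ^ q) => x y z.
case: (bitn a q); case: (bitn c q) => /=; lia.
Qed.

Lemma bitn_small a q : a < 2 ^ q -> bitn a q = false.
Proof. by move=> H; rewrite /bitn divn_small. Qed.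

Lemma bitn_big a q r : a < 2 ^ q -> q <= r -> bitn a r = false.
Proof.
move=> H qr; apply: bitn_small; apply: (leq_trans H); exact: leq_pexp2l.
Qed.

Lemma ltN a c N : a < 2 ^ N -> c < 2 ^ N ->
  (c < a) = Erec (fun r => bitn a r && ~~ bitn c r) (fun r => bitn a r == bitn c r) N.
Proof. by move=> Ha Hc; rewrite -ltE !modn_small. Qed.

Lemma carryN a c N : a < 2 ^ N -> c < 2 ^ N ->
  (2 ^ N <= a + c) = Erec (fun r => bitn a r && bitn c r) (fun r => bitn a r || bitn c r) N.
Proof. by move=> Ha Hc; rewrite -carryE !modn_small. Qed.

Lemma bits_eq a c N : a < 2 ^ N -> c < 2 ^ N ->
  (forall q, q < N -> bitn a q = bitn c q) -> a = c.
Proof.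
move=> Ha Hc H.
have nlt : forall x y, x < 2 ^ N -> y < 2 ^ N -> (forall q, q < N -> bitn x q = bitn y q) -> ~~ (y < x).
  move=> x y Hx Hy Hxy; rewrite (ltN Hx Hy); apply/negP => /ErecP [r [rN /andP [bx by'] _]].
  by move: by'; rewrite -Hxy // bx.
apply/eqP; rewrite eqn_leq; apply/andP; split; rewrite leqNgt; apply: nlt => // q qN; by rewrite H.
Qed.

Lemma bitn_full N q : q < N -> bitn (2 ^ N).-1 q.
Proof.
move=> qN; rewrite /bitn.
have E : (2 ^ N).-1 = (2 ^ (N - q)).-1 * 2 ^ q + (2 ^ q).-1.
  have -> : 2 ^ N = 2 ^ (N - q) * 2 ^ q by rewrite -expnD subnK // ltnW.
  have := pow_gt0 q; have := pow_gt0 (N - q); nia.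
rewrite E divnMDl ?pow_gt0 // divn_small ?addn0; last by rewrite prednK ?pow_gt0.
have : 0 < N - q by rewrite subn_gt0.
case: (N - q) => // k _; rewrite expnS.
have := pow_gt0 k; case: (2 ^ k) => // j _.
by rewrite mulnS /= oddM.
Qed.

Definition satN (N x : nat) := minn x (2 ^ N).-1.

Lemma satN_lt N x : satN N x < 2 ^ N.
Proof. rewrite /satN; have := pow_gt0 N; lia. Qed.

Lemma satN_id N x : x < 2 ^ N -> satN N x = x.
Proof. rewrite /satN; lia. Qed.

Lemma satN_add_l N a c : satN N (satN N a + c) = satN N (a + c).
Proof. rewrite /satN; lia. Qed.
Lemma satN_add_r N a c : satN N (a + satN N c) = satN N (a + c).
Proof. rewrite /satN; lia. Qed.
Lemma satN_mono N a c : a <= c -> satN N a <= satN N c.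
Proof. rewrite /satN; lia. Qed.

Lemma bit_sat_add N a c q : a < 2 ^ N -> c < 2 ^ N -> q < N ->
  bitn (satN N (a + c)) q =
  (2 ^ N <= a + c) || (bitn a q (+) bitn c q (+) (2 ^ q <= a %% 2 ^ q + c %% 2 ^ q)).
Proof.
move=> Ha Hc qN; case: leqP => H /=.
  by rewrite /satN (minn_idPr _) ?bitn_full //; have := pow_gt0 N; lia.
by rewrite satN_id // bit_add.
Qed.

Definition imp f g := FOr (FNot f) g.
Definition iff f g := FOr (FAnd f g) (FAnd (FNot f) (FNot g)).
Definition fxor f g := FNot (iff f g).

Definition bnd_f (ov : option nat) r := if ov is Some v then FLt r v else FTrue.
Definition EXGP (Gf Pf : nat -> nat -> form) (ov : option nat) (m : nat) : form :=
  FEx m (FAnd (FAnd (bnd_f ov m) (Gf m.+1 m))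
     (FAll m.+1 (imp (FAnd (FLt m m.+1) (bnd_f ov m.+1)) (Pf m.+2 m.+1)))).

Definition GT (A C : nat -> nat -> form) (m : nat) : form :=
  EXGP (fun m' r => FAnd (A m' r) (FNot (C m' r))) (fun m' r => iff (A m' r) (C m' r)) None m.
Definition LE A C m := FNot (GT A C m).
Definition CARRY (A C : nat -> nat -> form) m v :=
  EXGP (fun m' r => FAnd (A m' r) (C m' r)) (fun m' r => FOr (A m' r) (C m' r)) (Some v) m.
Definition OVF (A C : nat -> nat -> form) m :=
  EXGP (fun m' r => FAnd (A m' r) (C m' r)) (fun m' r => FOr (A m' r) (C m' r)) None m.
Definition ADDS (A C : nat -> nat -> form) : nat -> nat -> form :=
  fun m v => FOr (OVF A C m) (fxor (fxor (A m v) (C m v)) (CARRY A C m v)).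

Section Sem.
Variables (P : dynprog) (n : nat) (adv : advice) (I : ksinst)
          (A : nat -> seq nat -> bool) (par : seq nat).
Local Notation N := (n + adv_size adv).
Local Notation H := (holds P n adv I A par).

Definition env_ok (env : nat -> nat) := forall u, env u < N.
Definition agree m0 (env env0 : nat -> nat) := forall u, u < m0 -> env u = env0 u.

Lemma HEx env x g : reflect (exists2 v, v < N & H (upd_env env x v) g) (H env (FEx x g)).
Proof.
apply: (iffP hasP) => [[v]|[v]].
  by rewrite mem_iota /= => Hv Hg; exists v.
by move=> Hv Hg; exists v => //; rewrite mem_iota.
Qed.
Lemma HAll env x g : reflect (forall v, v < N -> H (upd_env env x v) g) (H env (FAll x g)).
Proof.
apply: (iffP allP) => Hg v.
  by move=> Hv; apply: Hg; rewrite mem_iota.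
by rewrite mem_iota /= => Hv; apply: Hg.
Qed.

Lemma H_imp env f g : H env (imp f g) = H env f ==> H env g.
Proof. by rewrite /= implybE. Qed.
Lemma H_iff env f g : H env (iff f g) = (H env f == H env g).
Proof. by rewrite /=; case: (H env f); case: (H env g). Qed.
Lemma H_xor env f g : H env (fxor f g) = H env f (+) H env g.
Proof. by rewrite /fxor /iff /=; case: (H env f); case: (H env g). Qed.

Lemma upd_eq env x v : upd_env env x v x = v.
Proof. by rewrite /upd_env eqxx. Qed.
Lemma upd_neq env x v y : y != x -> upd_env env x v y = env y.
Proof. by rewrite /upd_env => /negPf ->. Qed.

Lemma env_ok_upd env x v : env_ok env -> v < N -> env_ok (upd_env env x v).
Proof. by move=> H1 H2 u; rewrite /upd_env; case: ifP. Qed.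
Lemma agree_upd m0 env env0 x v : agree m0 env env0 -> m0 <= x -> agree m0 (upd_env env x v) env0.
Proof. move=> Ha Hx u Hu; rewrite upd_neq ?Ha //; lia. Qed.
Lemma agree_refl m env : agree m env env. Proof. by []. Qed.
Lemma agree_lift m0 m1 env env1 env0 :
  m0 <= m1 -> agree m0 env1 env0 -> agree m1 env env1 -> agree m0 env env0.
Proof. move=> Hm H1 H2 u Hu; rewrite H2 ?H1 //; lia. Qed.

Definition psp m0 env0 (G : nat -> nat -> form) (g : nat -> bool) :=
  forall m r env, m0 <= m -> r < m -> agree m0 env env0 -> env_ok env -> H env (G m r) = g (env r).
Definition gsp m0 env0 G a := psp m0 env0 G (bitn a).
Definition bsp m0 env0 (F : nat -> form) (b : bool) :=
  forall m env, m0 <= m -> agree m0 env env0 -> env_ok env -> H env (F m) = b.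

Lemma psp_lift m0 env0 G g m1 env1 :
  psp m0 env0 G g -> m0 <= m1 -> agree m0 env1 env0 -> psp m1 env1 G g.
Proof.
move=> HG Hm Ha m r env H1 H2 H3 H4; apply: HG => //; first lia.
exact: agree_lift Ha H3.
Qed.

Lemma psp_and m0 env0 G1 G2 g1 g2 : psp m0 env0 G1 g1 -> psp m0 env0 G2 g2 ->
  psp m0 env0 (fun m r => FAnd (G1 m r) (G2 m r)) (fun x => g1 x && g2 x).
Proof. by move=> H1 H2 m r env ? ? ? ?; rewrite /= H1 // H2. Qed.
Lemma psp_or m0 env0 G1 G2 g1 g2 : psp m0 env0 G1 g1 -> psp m0 env0 G2 g2 ->
  psp m0 env0 (fun m r => FOr (G1 m r) (G2 m r)) (fun x => g1 x || g2 x).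
Proof. by move=> H1 H2 m r env ? ? ? ?; rewrite /= H1 // H2. Qed.
Lemma psp_not m0 env0 G1 g1 : psp m0 env0 G1 g1 ->
  psp m0 env0 (fun m r => FNot (G1 m r)) (fun x => ~~ g1 x).
Proof. by move=> H1 m r env ? ? ? ?; rewrite /= H1. Qed.
Lemma psp_iff m0 env0 G1 G2 g1 g2 : psp m0 env0 G1 g1 -> psp m0 env0 G2 g2 ->
  psp m0 env0 (fun m r => iff (G1 m r) (G2 m r)) (fun x => g1 x == g2 x).
Proof. by move=> H1 H2 m r env ? ? ? ?; rewrite H_iff H1 // H2. Qed.

Lemma EXGP_sem m0 env0 Gf Pf g pr ov :
  psp m0 env0 Gf g -> psp m0 env0 Pf pr ->
  (if ov is Some v then v < m0 else true) -> env_ok env0 ->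
  bsp m0 env0 (EXGP Gf Pf ov) (Erec g pr (if ov is Some v then env0 v else N)).
Proof.
move=> HG HP Hov Hok0 m env Hm Hag Hok.
have bdN : (if ov is Some v then env0 v else N) <= N by case: ov Hov => [v|] //= _; exact: ltnW.
have Hbnd : forall env' x, agree m0 env' env0 -> env_ok env' ->
    H env' (bnd_f ov x) = (env' x < (if ov is Some v then env0 v else N)).
  move=> env' x Ha Hok'; case: ov Hov {bdN} => [v|] /= Hv; [by rewrite (Ha v Hv) | by rewrite Hok'].
move: bdN Hbnd; set bd := (if ov is Some v then env0 v else N) => bdN Hbnd.
have E1 : forall r, r < N -> [/\ agree m0 (upd_env env m r) env0, env_ok (upd_env env m r)
     & upd_env env m r m = r].
  move=> r rN; split; [exact: agree_upd | exact: env_ok_upd | exact: upd_eq].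
have E2 : forall r t, r < N -> t < N ->
  let env2 := upd_env (upd_env env m r) m.+1 t in
  [/\ agree m0 env2 env0, env_ok env2, env2 m = r & env2 m.+1 = t].
  move=> r t rN tN /=; split.
  - by apply: agree_upd; [apply: agree_upd|lia].
  - by apply: env_ok_upd => //; apply: env_ok_upd.
  - by rewrite upd_neq ?upd_eq //; lia.
  - exact: upd_eq.
apply/idP/idP.
  case/HEx => r rN; case: (E1 r rN) => A1 O1 V1.
  rewrite /= Hbnd // V1 (HG _ _ _ _ (ltnSn m)) // ?V1; last lia.
  case/andP => /andP [rb gr] /allP Hall; apply/ErecP; exists r; split => // t rt tb.
  have tN : t < N by apply: leq_trans tb bdN.
  have := Hall t; rewrite mem_iota /= tN => /(_ isT).
  case: (E2 r t rN tN) => A2 O2 V2 W2.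
  rewrite Hbnd // V2 W2 rt tb /= (HP _ _ _ _ (ltnSn _)) // ?W2 //; lia.
case/ErecP => r [rb gr Hpr].
have rN : r < N by apply: leq_trans rb bdN.
apply/HEx; exists r => //; case: (E1 r rN) => A1 O1 V1.
rewrite /= Hbnd // V1 (HG _ _ _ _ (ltnSn m)) // ?V1 ?rb ?gr /=; last lia.
apply/allP => t; rewrite mem_iota /= => tN; case: (E2 r t rN tN) => A2 O2 V2 W2.
rewrite Hbnd // V2 W2 (HP _ _ _ _ (ltnSn _)) // ?W2; last lia.
by rewrite -implybE; apply/implyP => /andP [rt tb]; apply: Hpr.
Qed.
Lemma GT_sem m0 env0 Ag Cg a c : gsp m0 env0 Ag a -> gsp m0 env0 Cg c ->
  a < 2 ^ N -> c < 2 ^ N -> env_ok env0 -> bsp m0 env0 (GT Ag Cg) (c < a).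
Proof.
move=> HA HC Ha Hc Hok; rewrite (ltN Ha Hc).
have HH := EXGP_sem (psp_and HA (psp_not HC)) (psp_iff HA HC) (ov := None) isT Hok.
exact: HH.
Qed.

Lemma LE_sem m0 env0 Ag Cg a c : gsp m0 env0 Ag a -> gsp m0 env0 Cg c ->
  a < 2 ^ N -> c < 2 ^ N -> env_ok env0 -> bsp m0 env0 (LE Ag Cg) (a <= c).
Proof.
move=> HA HC Ha Hc Hok m env Hm Hag Hok'.
change (~~ H env (GT Ag Cg m) = (a <= c)).
by rewrite (GT_sem HA HC Ha Hc Hok) // -leqNgt.
Qed.

Lemma ADDS_sem m0 env0 Ag Cg a c : gsp m0 env0 Ag a -> gsp m0 env0 Cg c ->
  a < 2 ^ N -> c < 2 ^ N -> gsp m0 env0 (ADDS Ag Cg) (satN N (a + c)).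
Proof.
move=> HA HC Ha Hc m v env Hm Hv Hag Hok.
have HA' := psp_lift HA Hm Hag; have HC' := psp_lift HC Hm Hag.
change (H env (OVF Ag Cg m) || H env (fxor (fxor (Ag m v) (Cg m v)) (CARRY Ag Cg m v))
   = bitn (satN N (a + c)) (env v)).
rewrite !H_xor (HA' m v env) // (HC' m v env) //.
have H1 := EXGP_sem (psp_and HA' HC') (psp_or HA' HC') (ov := None) isT Hok (leqnn m) (@agree_refl m env) Hok.
have H2 := EXGP_sem (psp_and HA' HC') (psp_or HA' HC') (ov := Some v) Hv Hok (leqnn m) (@agree_refl m env) Hok.
rewrite /OVF /CARRY H1 H2 /=.
by rewrite -carryN // -carryE bit_sat_add.
Qed.

End Sem.

Definition adv_of (k : nat) : advice :=
  Advice k.+1 (fun r t => if r == 0 then true else if t is [:: a; j] then bitn a j else false).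

Definition ADV x := FAdv 0 [:: x].
Definition BITA y z := FAdv 1 [:: y; z].
Definition ISN0 z m := FAnd (ADV z) (FAll m (imp (ADV m) (FNot (FLt m z)))).
Definition BITIDX y j m :=
  FEx m (FEx m.+1 (FAnd (FAnd (ISN0 m m.+2) (FAdd m j m.+1)) (BITA y m.+1))).
Definition EQNUM (Ag : nat -> nat -> form) y m := FAll m (iff (Ag m.+1 m) (BITIDX y m m.+1)).
Definition Wpar : nat -> nat -> form := fun _ v => FPar 1 v.
Definition WLE y2 m := FEx m (FAnd (FAnd (ADV m) (FNot (FLt y2 m))) (EQNUM Wpar m m.+1)).
Definition SPLIT y1 y2 y3 y m :=
  FEx m (FEx m.+1 (FEx m.+2 (FEx m.+3
    (FAnd (FAnd (FAnd (ISN0 m m.+4) (FAdd m m.+1 y2)) (FAnd (FAdd m m.+2 y3) (FAdd y1 m.+1 m.+3)))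
          (FAnd (FAdd m.+3 m.+2 y) (FAnd (ADV y1) (FAnd (ADV y2) (ADV y3)))))))).
Definition ISZERO z m := FAll m (FNot (FLt m z)).
Definition ISTOP z m := FAll m (FNot (FLt z m)).
Definition INRANGE x i j := FAnd (FNot (FLt x i)) (FLt x j).
Definition SUCC x x1 m := FAnd (FLt x x1) (FAll m (FNot (FAnd (FLt x m) (FLt m x1)))).

Ltac upd_simp := repeat match goal with
 | |- context [upd_env ?e ?x ?v ?x] => rewrite (upd_eq e x v)
 | |- context [upd_env ?e ?x ?v ?y] => rewrite (@upd_neq e x v y); last by lia
 end.

Section Dom.
Variables (P : dynprog) (n k : nat) (I : ksinst) (A : nat -> seq nat -> bool) (par : seq nat).
Hypothesis HPadv : adv_ar P = [:: 1; 2].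
Local Notation adv := (adv_of k).
Local Notation N := (n + k.+1).
Local Notation H := (holds P n adv I A par).

Lemma nN : n < n + adv_size adv. Proof. by rewrite /= addnS ltnS leq_addr. Qed.

Lemma H_and env f g : H env (FAnd f g) = H env f && H env g. Proof. by []. Qed.
Lemma H_or env f g : H env (FOr f g) = H env f || H env g. Proof. by []. Qed.
Lemma H_not env f : H env (FNot f) = ~~ H env f. Proof. by []. Qed.
Lemma H_lt env x y : H env (FLt x y) = (env x < env y). Proof. by []. Qed.
Lemma H_add env x y z : H env (FAdd x y z) = (env x + env y == env z). Proof. by []. Qed.
Lemma H_par env j x : H env (FPar j x) = bitn (nth 0 par j) (env x). Proof. by []. Qed.
Lemma H_adv0 env x : env_ok n adv env -> H env (ADV x) = (n <= env x).
Proof. move=> Hok; by rewrite /ADV /= HPadv /= Hok !andbT. Qed.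
Lemma H_adv1 env y z : env_ok n adv env ->
  H env (BITA y z) = [&& n <= env y, n <= env z & bitn (env y - n) (env z - n)].
Proof. by move=> Hok; rewrite /BITA /= HPadv /= !Hok !andbT andbA. Qed.

Lemma ISN0_sem env z m : z < m -> env_ok n adv env -> H env (ISN0 z m) = (env z == n).
Proof.
move=> zm Hok; rewrite /ISN0 H_and H_adv0 //.
apply/idP/idP.
  case/andP => nz /HAll /(_ n nN).
  rewrite H_imp H_adv0; last exact: env_ok_upd Hok nN.
  rewrite H_not H_lt; upd_simp; rewrite leqnn /= -leqNgt => zn; apply/eqP; lia.
move/eqP=> Ez; rewrite Ez leqnn andTb; apply/HAll => v vN.
rewrite H_imp H_adv0; last exact: env_ok_upd Hok vN.
rewrite H_not H_lt; upd_simp; rewrite Ez -leqNgt; exact/implyP.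
Qed.

Lemma env_ok2 env x v y w : env_ok n adv env -> v < N -> w < N ->
  env_ok n adv (upd_env (upd_env env x v) y w).
Proof. by move=> Hok vN wN; apply: env_ok_upd => //; apply: env_ok_upd. Qed.

Lemma HokN env u : env_ok n adv env -> env u < n + k.+1. Proof. by move=> H; apply: H. Qed.

Lemma small_bit a j : a < k.+1 -> k.+1 <= j -> bitn a j = false.
Proof. move=> Ha Hj; apply: (bitn_big (q := k.+1)) => //; apply: leq_trans Ha _; exact: ltnW (ltn_expl _ (ltnSn 1)). Qed.

Lemma BITIDX_sem env y j m : y < m -> j < m -> env_ok n adv env ->
  H env (BITIDX y j m) = (n <= env y) && bitn (env y - n) (env j).
Proof.
move=> ym jm Hok; rewrite /BITIDX; apply/idP/idP.
  case/HEx => z0 z0N /HEx [z zN].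
  rewrite H_and H_and ISN0_sem; [|lia|exact: env_ok2].
  rewrite H_add H_adv1; last exact: env_ok2.
  upd_simp; case/andP => /andP [/eqP E0 /eqP E1] /and3P [ny nz b].
  by rewrite ny; move: b; rewrite -E1 E0 addKn.
case/andP => ny b.
have yk : env y - n < k.+1 by have := HokN y Hok; lia.
have jN : n + env j < N.
  rewrite ltn_add2l ltnNge; apply/negP => kj; by rewrite small_bit in b.
apply/HEx; exists n; first exact: nN.
apply/HEx; exists (n + env j) => //.
rewrite H_and H_and ISN0_sem; [|lia|exact: env_ok2 Hok nN jN].
rewrite H_add H_adv1; last exact: env_ok2 Hok nN jN.
upd_simp; rewrite !eqxx ny leq_addr addKn b.
done.
Qed.

Lemma EQNUM_sem env (Ag : nat -> nat -> form) a y m : gsp P n adv I A par m env Ag a ->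
  y < m -> env_ok n adv env -> a < 2 ^ N ->
  H env (EQNUM Ag y m) = (if n <= env y then a == env y - n else a == 0).
Proof.
move=> HA ym Hok Ha.
have E : forall v, v < N -> H (upd_env env m v) (iff (Ag m.+1 m) (BITIDX y m m.+1))
    = (bitn a v == (n <= env y) && bitn (env y - n) v).
  move=> v vN; rewrite H_iff (HA m.+1 m) //; last exact: env_ok_upd.
    rewrite BITIDX_sem //; [|lia|exact: env_ok_upd]; by upd_simp.
  exact: agree_upd.
have yN := HokN y Hok.
have Hlt : forall x, x < N -> x < 2 ^ N.
  move=> x xN; apply: leq_trans xN _; exact: ltnW (ltn_expl _ (ltnSn 1)).
rewrite /EQNUM; apply/idP/idP.
  move/HAll => Hall; case: ifP => ny; apply/eqP; apply: (bits_eq (N := N)) => //.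
  - by apply: Hlt; lia.
  - by move=> q qN; have := Hall q qN; rewrite E // ny /= => /eqP.
  - by rewrite expn_gt0.
  - by move=> q qN; have := Hall q qN; rewrite E // ny /= /bitn div0n => /eqP.
move=> Hc; apply/HAll => v vN; rewrite E //.
by case: ifP Hc => ny /eqP ->; rewrite /= ?eqxx // /bitn div0n.
Qed.

Lemma WLE_sem env y2 m : y2 < m -> env_ok n adv env -> n <= env y2 ->
  nth 0 par 1 < 2 ^ n -> H env (WLE y2 m) = (nth 0 par 1 <= env y2 - n).
Proof.
move=> ym Hok ny Hw.
have HW : forall m0 env0, gsp P n adv I A par m0 env0 Wpar (nth 0 par 1) by [].
have HwN : nth 0 par 1 < 2 ^ N by apply: leq_trans Hw _; rewrite leq_exp2l // leq_addr.
have yN := HokN y2 Hok.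
rewrite /WLE; apply/idP/idP.
  case/HEx => u uN; rewrite !H_and H_not H_lt H_adv0; last exact: env_ok_upd.
  rewrite (EQNUM_sem (HW _ _)) //; last exact: env_ok_upd.
  upd_simp; case/andP => /andP [nu]; rewrite -leqNgt => uy; rewrite nu => /eqP ->; lia.
move=> wy; apply/HEx; exists (n + nth 0 par 1); first by rewrite /=; lia.
rewrite !H_and H_not H_lt H_adv0; last by apply: env_ok_upd => //=; lia.
rewrite (EQNUM_sem (HW _ _)) //; last by apply: env_ok_upd => //=; lia.
by upd_simp; rewrite leq_addr -leqNgt addKn eqxx /=; lia.
Qed.

Lemma SPLIT_sem env y1 y2 y3 y m : y1 < m -> y2 < m -> y3 < m -> y < m -> env_ok n adv env ->
  H env (SPLIT y1 y2 y3 y m) =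
  [&& n <= env y1, n <= env y2, n <= env y3 &
      (env y1 - n) + (env y2 - n) + (env y3 - n) + n == env y].
Proof.
move=> y1m y2m y3m ym Hok.
have Hok4 : forall a b c d, a < N -> b < N -> c < N -> d < N ->
  env_ok n adv (upd_env (upd_env (upd_env (upd_env env m a) m.+1 b) m.+2 c) m.+3 d).
  by move=> a b c d aN bN cN dN; do 4 (apply: env_ok_upd => //).
have := HokN y1 Hok; have := HokN y2 Hok; have := HokN y3 Hok; have := HokN y Hok => yN y3N y2N y1N.
rewrite /SPLIT; apply/idP/idP.
  case/HEx => z0 z0N /HEx [d2 d2N] /HEx [d3 d3N] /HEx [u uN].
  rewrite H_and H_and H_and ISN0_sem; [|lia|exact: Hok4].
  rewrite !H_and !H_add !H_adv0; try exact: Hok4.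
  upd_simp; case/andP => /andP [/andP [/eqP E0 /eqP E2] /andP [/eqP E3 /eqP E4]].
  case/andP => /eqP E5 /and3P [n1 n2 n3]; rewrite n1 n2 n3 /=; apply/eqP; lia.
case/and4P => n1 n2 n3 /eqP E.
apply/HEx; exists n; first exact: nN.
apply/HEx; exists (env y2 - n); first by rewrite /=; lia.
apply/HEx; exists (env y3 - n); first by rewrite /=; lia.
apply/HEx; exists (env y1 + (env y2 - n)); first by rewrite /=; lia.
rewrite H_and H_and H_and ISN0_sem; [|lia|apply: Hok4 => /=; lia].
rewrite !H_and !H_add !H_adv0; try (apply: Hok4 => /=; lia).
upd_simp; rewrite n1 n2 n3 ?andbT; repeat (apply/andP; split); try apply/eqP; lia.
Qed.

Lemma ISZERO_sem env z m : z < m -> env_ok n adv env -> H env (ISZERO z m) = (env z == 0).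
Proof.
move=> zm Hok; rewrite /ISZERO; apply/idP/idP.
  move/HAll => /(_ 0 (leq_trans (ltn0Sn _) nN)); rewrite H_not H_lt; upd_simp; lia.
move/eqP=> E; apply/HAll => v vN; rewrite H_not H_lt; upd_simp; lia.
Qed.

Lemma ISTOP_sem env z m : z < m -> env_ok n adv env -> H env (ISTOP z m) = (env z == n + k).
Proof.
move=> zm Hok; have := HokN z Hok => zN; rewrite /ISTOP; apply/idP/idP.
  have hk : n + k < n + adv_size adv by rewrite /=; lia.
  move/HAll => /(_ (n + k) hk); rewrite H_not H_lt; upd_simp; lia.
move/eqP=> E; apply/HAll => v vN; have vN' : v < n + k.+1 := vN; rewrite H_not H_lt; upd_simp; lia.
Qed.

Lemma INRANGE_sem env x i j : H env (INRANGE x i j) = (env i <= env x < env j).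
Proof. by rewrite /INRANGE H_and H_not !H_lt -leqNgt. Qed.

Lemma SUCC_sem env x x1 m : x < m -> x1 < m -> env_ok n adv env ->
  H env (SUCC x x1 m) = (env x1 == (env x).+1).
Proof.
move=> xm x1m Hok; have := HokN x Hok; have := HokN x1 Hok => x1N xN.
rewrite /SUCC H_and H_lt; apply/idP/idP.
  case/andP => lt; have hk : (env x).+1 < n + adv_size adv by rewrite /=; lia.
  move/HAll => /(_ (env x).+1 hk); rewrite H_not H_and !H_lt; upd_simp; lia.
move/eqP=> E; rewrite E ltnSn andTb; apply/HAll => v vN; rewrite H_not H_and !H_lt; upd_simp; lia.
Qed.

End Dom.

Section Opt.
Variable n : nat.

Definition wsum (I : ksinst) (S : {set 'I_n}) := \sum_(t in S) ks_w I t.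
Definition psum (I : ksinst) (S : {set 'I_n}) := \sum_(t in S) ks_p I t.
Definition feas I i j b (S : {set 'I_n}) := [forall t in S, i <= t < j] && (wsum I S <= b).
Definition opt I i j b := \max_(S | feas I i j b S) psum I S.

Lemma opt_ge I i j b S : feas I i j b S -> psum I S <= opt I i j b.
Proof. move=> HS; exact: (leq_bigmax_cond (P := feas I i j b)). Qed.

Lemma opt_ex I i j b : exists S, feas I i j b S /\ psum I S = opt I i j b.
Proof.
have H0 : 0 < #|[pred S | feas I i j b S]|.
  apply/card_gt0P; exists set0; rewrite inE /feas /wsum big_set0 andbT.
  by apply/forall_inP => t; rewrite inE.
case: (eq_bigmax_cond (psum I) H0) => S HS E; exists S; split => //.
Qed.

Lemma split3 (F : 'I_n -> nat) (S : {set 'I_n}) (x : 'I_n) :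
  \sum_(t in S) F t = \sum_(t in S | t < x) F t + \sum_(t in S | t == x) F t
                      + \sum_(t in S | x < t) F t.
Proof.
rewrite (bigID (fun t : 'I_n => t < x)) /= -addnA; congr (_ + _).
rewrite (bigID (fun t : 'I_n => t == x)) /=; congr (_ + _).
  apply: eq_bigl => t; case: (t =P x) => [->|_]; by rewrite ?ltnn ?andbT ?andbF.
apply: eq_bigl => t; case: (t =P x) => [->|/eqP tx]; first by rewrite ltnn !andbF.
rewrite andbT; congr (_ && _).
rewrite -leqNgt leq_eqVlt; move: tx; rewrite -(inj_eq val_inj) /= eq_sym => /negPf ->; done.
Qed.

Lemma sum_pred1 (F : 'I_n -> nat) (S : {set 'I_n}) (x : 'I_n) :
  \sum_(t in S | t == x) F t = if x \in S then F x else 0.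
Proof.
case: ifP => Hx.
  rewrite (big_pred1 x) // => t /=; case: (t =P x) => [->|_]; by rewrite ?Hx ?andbF ?andbT ?eqxx.
by rewrite big1 // => t /andP [tS /eqP Et]; rewrite Et Hx in tS.
Qed.

Definition itemv p w b2 := if w <= b2 then p else 0.

Variables (I : ksinst) (x : 'I_n) (p w : nat).
Local Notation I' := (apply_change (CItem x p w) I).

Lemma I'p t : ks_p I' t = if t == x then p else ks_p I t. Proof. by []. Qed.
Lemma I'w t : ks_w I' t = if t == x then w else ks_w I t. Proof. by []. Qed.

Lemma sum_notx (F G : nat -> nat) (S : {set 'I_n}) (P : pred 'I_n) :
  (forall t : 'I_n, t \in S -> P t -> val t != val x) ->
  (forall t, t != val x -> F t = G t) ->
  \sum_(t in S | P t) F t = \sum_(t in S | P t) G t.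
Proof. move=> H1 H2; apply: eq_bigr => t /andP [tS Pt]; apply: H2; exact: H1. Qed.

Lemma decomp_le i j b b1 b2 b3 : i <= x < j -> b1 + b2 + b3 = b ->
  opt I i x b1 + itemv p w b2 + opt I x.+1 j b3 <= opt I' i j b.
Proof.
move=> /andP [ix xj] Eb.
case: (opt_ex I i x b1) => SL [/andP [/forall_inP FL WL] <-].
case: (opt_ex I x.+1 j b3) => SR [/andP [/forall_inP FR WR] <-].
set Sx : {set 'I_n} := if w <= b2 then [set x] else set0.
set S := SL :|: Sx :|: SR.
have memS : forall t, t \in S = [|| t \in SL, t \in Sx | t \in SR].
  by move=> t; rewrite !inE orbA.
have inSx : forall t, t \in Sx = (w <= b2) && (t == x).
  by move=> t; rewrite /Sx; case: ifP; rewrite ?inE.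
have hL : forall t : 'I_n, (t \in SL) ==> (i <= t < x) by move=> t; apply/implyP; exact: FL.
have hR : forall t : 'I_n, (t \in SR) ==> (x.+1 <= t < j) by move=> t; apply/implyP; exact: FR.
have eL : forall (F : 'I_n -> nat), \sum_(t in S | t < x) F t = \sum_(t in SL) F t.
  move=> F; apply: eq_bigl => t; rewrite memS inSx -(inj_eq val_inj) /=.
  move: (hL t) (hR t); case: (t \in SL); case: (t \in SR); case: (w <= b2) => /=; lia.
have eR : forall (F : 'I_n -> nat), \sum_(t in S | x < t) F t = \sum_(t in SR) F t.
  move=> F; apply: eq_bigl => t; rewrite memS inSx -(inj_eq val_inj) /=.
  move: (hL t) (hR t); case: (t \in SL); case: (t \in SR); case: (w <= b2) => /=; lia.
have ex : forall (F : 'I_n -> nat), \sum_(t in S | t == x) F t = if w <= b2 then F x else 0.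
  move=> F; rewrite sum_pred1 memS inSx eqxx andbT.
  move: (hL x) (hR x); case: (x \in SL); case: (x \in SR); case: (w <= b2) => /=; lia.
have nL : forall t : 'I_n, t \in S -> t < x -> val t != val x by move=> t _ /=; rewrite neq_ltn => ->.
have nR : forall t : 'I_n, t \in S -> x < t -> val t != val x by move=> t _ /=; rewrite neq_ltn orbC => ->.
have FeqP : forall t, t != val x -> ks_p I' t = ks_p I t by move=> t /negPf; rewrite I'p => ->.
have FeqW : forall t, t != val x -> ks_w I' t = ks_w I t by move=> t /negPf; rewrite I'w => ->.
have Hp : psum I' S = psum I SL + itemv p w b2 + psum I SR.
  rewrite /psum (split3 _ _ x) (sum_notx nL FeqP) (sum_notx nR FeqP) eL eR ex /itemv.
  by case: ifP => // _; rewrite I'p eqxx.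
suff HF : feas I' i j b S by rewrite -Hp; exact: opt_ge.
apply/andP; split.
  apply/forall_inP => t; rewrite memS inSx => /or3P [tL|/andP [_ /eqP ->]|tR].
  - by have := FL t tL; lia.
  - by rewrite ix xj.
  - by have := FR t tR; lia.
rewrite /wsum (split3 _ _ x) (sum_notx nL FeqW) (sum_notx nR FeqW) eL eR ex.
rewrite I'w eqxx -Eb; move: WL WR; rewrite /wsum; case: ifP; lia.
Qed.

Lemma decomp_ex i j b : i <= x < j ->
  exists b1 b2 b3, b1 + b2 + b3 = b /\
    opt I' i j b <= opt I i x b1 + itemv p w b2 + opt I x.+1 j b3.
Proof.
move=> /andP [ix xj].
case: (opt_ex I' i j b) => S [/andP [/forall_inP FS WS] <-].
set SL := [set t in S | t < x]; set SR := [set t in S | x < t].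
have nL : forall t : 'I_n, t \in S -> t < x -> val t != val x by move=> t _ /=; rewrite neq_ltn => ->.
have nR : forall t : 'I_n, t \in S -> x < t -> val t != val x by move=> t _ /=; rewrite neq_ltn orbC => ->.
have FeqP : forall t, t != val x -> ks_p I' t = ks_p I t by move=> t /negPf; rewrite I'p => ->.
have FeqW : forall t, t != val x -> ks_w I' t = ks_w I t by move=> t /negPf; rewrite I'w => ->.
have eL : forall F : 'I_n -> nat, \sum_(t in S | t < x) F t = \sum_(t in SL) F t.
  by move=> F; apply: eq_bigl => t; rewrite inE.
have eR : forall F : 'I_n -> nat, \sum_(t in S | x < t) F t = \sum_(t in SR) F t.
  by move=> F; apply: eq_bigl => t; rewrite inE.
have Ew : wsum I' S = wsum I SL + (if x \in S then w else 0) + wsum I SR.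
  rewrite /wsum (split3 _ _ x) (sum_notx nL FeqW) (sum_notx nR FeqW) eL eR sum_pred1.
  by rewrite I'w eqxx.
have Ep : psum I' S = psum I SL + (if x \in S then p else 0) + psum I SR.
  rewrite /psum (split3 _ _ x) (sum_notx nL FeqP) (sum_notx nR FeqP) eL eR sum_pred1.
  by rewrite I'p eqxx.
set b1 := wsum I SL; set b2 := if x \in S then w else 0.
exists b1, b2, (b - b1 - b2); split; first by move: WS; rewrite Ew /b2; case: (x \in S); lia.
have HL : psum I SL <= opt I i x b1.
  apply: opt_ge; rewrite /feas leqnn andbT; apply/forall_inP => t; rewrite inE => /andP [tS tx].
  by have := FS t tS; rewrite tx andbT; case/andP.
have HR : psum I SR <= opt I x.+1 j (b - b1 - b2).
  apply: opt_ge; apply/andP; split.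
    apply/forall_inP => t; rewrite inE => /andP [tS tx].
    by have := FS t tS; rewrite tx /=; case/andP.
  by move: WS; rewrite Ew /b2; case: (x \in S); lia.
have HX : (if x \in S then p else 0) <= itemv p w b2.
  by rewrite /itemv /b2; case: (x \in S) => //; rewrite leqnn.
rewrite Ep; lia.
Qed.

Lemma opt_out i j b : ~~ (i <= x < j) -> opt I' i j b = opt I i j b.
Proof.
move=> Hx.
have sE : forall (F G : nat -> nat) (S : {set 'I_n}), [forall t in S, i <= t < j] ->
    (forall t, t != val x -> F t = G t) -> \sum_(t in S) F t = \sum_(t in S) G t.
  move=> F G S /forall_inP HS HFG; apply: eq_bigr => t tS; apply: HFG.
  by apply/eqP => Etx; move: (HS t tS); rewrite Etx (negPf Hx).
have FeqP : forall t, t != val x -> ks_p I' t = ks_p I t by move=> t /negPf; rewrite I'p => ->.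
have FeqW : forall t, t != val x -> ks_w I' t = ks_w I t by move=> t /negPf; rewrite I'w => ->.
have feasE : forall S, feas I' i j b S = feas I i j b S.
  move=> S; rewrite /feas; case: (boolP [forall t in S, i <= t < j]) => HS //=.
  by rewrite /wsum (sE _ _ _ HS FeqW).
rewrite /opt (eq_bigl _ _ feasE); apply: eq_bigr => S /andP [HS _].
by rewrite /psum (sE _ _ _ HS FeqP).
Qed.

End Opt.

Lemma opt_empty n i j b : opt n ks_empty i j b = 0.
Proof.
apply/eqP; rewrite -leqn0; apply/bigmax_leqP => S _; by rewrite /psum big1.
Qed.

Lemma knap_opt n I M : n <= M -> knapsack n I = (ks_T I <= opt n I 0 M (ks_B I)).
Proof.
move=> nM; apply/idP/idP.
  case/existsP => S /andP [HT HB]; apply: leq_trans HT _; apply: opt_ge.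
  rewrite /feas HB andbT; apply/forall_inP => t _ /=; exact: leq_trans (ltn_ord t) nM.
case: (opt_ex n I 0 M (ks_B I)) => S [/andP [_ HB] <-] HT.
by apply/existsP; exists S; rewrite HT.
Qed.

Definition Cold (xi xj xy : nat) : nat -> nat -> form := fun _ v => FAux 1 [:: xi; xj; xy; v].
Definition CoR (x xj xy : nat) : nat -> nat -> form :=
  fun m v => FEx m (FAnd (SUCC x m m.+1) (FAux 1 [:: m; xj; xy; v])).
Definition Item (y2 : nat) : nat -> nat -> form := fun m v => FAnd (WLE y2 m) (FPar 0 v).
Definition Sg x xi xj y1 y2 y3 := ADDS (ADDS (Cold xi x y1) (Item y2)) (CoR x xj y3).
Definition Cnew (x xi xj xy : nat) : nat -> nat -> form := fun m v =>
  FAnd (ADV xy) (FOr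
    (FAnd (INRANGE x xi xj)
      (FEx m (FEx m.+1 (FEx m.+2
        (FAnd (FAnd (SPLIT m m.+1 m.+2 xy m.+3)
                    (FAll m.+3 (FAll m.+4 (FAll m.+4.+1
                       (imp (SPLIT m.+3 m.+4 m.+4.+1 xy m.+4.+2)
                            (LE (Sg x xi xj m.+3 m.+4 m.+4.+1) (Sg x xi xj m m.+1 m.+2) m.+4.+2))))))
              (Sg x xi xj m m.+1 m.+2 m.+3 v))))))
    (FAnd (FNot (INRANGE x xi xj)) (FAux 1 [:: xi; xj; xy; v]))).

Section Main.
Variables (P : dynprog) (n k : nat) (I : ksinst) (A : nat -> seq nat -> bool) (par : seq nat).
Hypothesis HPadv : adv_ar P = [:: 1; 2].
Hypothesis HPaux : aux_ar P = [:: 0; 4].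
Local Notation adv := (adv_of k).
Local Notation N := (n + k.+1).
Local Notation H := (holds P n adv I A par).
Definition Cval I0 i j y := if n <= y then satN N (opt n I0 i j (y - n)) else 0.
Hypothesis HA : forall i j y q, i < N -> j < N -> y < N -> q < N ->
  A 1 [:: i; j; y; q] = bitn (Cval I i j y) q.

Lemma H_aux1 env a b c d : env_ok n adv env ->
  H env (FAux 1 [:: a; b; c; d]) = bitn (Cval I (env a) (env b) (env c)) (env d).
Proof. move=> Hok; rewrite /= HPaux /= !Hok /=; exact: HA. Qed.

Lemma Cold_sem m0 env0 xi xj xy : xi < m0 -> xj < m0 -> xy < m0 ->
  gsp P n adv I A par m0 env0 (Cold xi xj xy) (Cval I (env0 xi) (env0 xj) (env0 xy)).
Proof.
move=> h1 h2 h3 m v env Hm Hv Hag Hok; rewrite /Cold H_aux1 //.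
by rewrite (Hag xi) // (Hag xj) // (Hag xy).
Qed.

Lemma pow_nN x : x < 2 ^ n -> x < 2 ^ N.
Proof. move=> h; apply: leq_trans h _; rewrite leq_exp2l //; lia. Qed.

Lemma Cval_lt I0 i j y : Cval I0 i j y < 2 ^ N.
Proof. rewrite /Cval; case: ifP => _; [exact: satN_lt | exact: expn_gt0]. Qed.

Lemma CoR_sem m0 env0 x xj xy : x < m0 -> xj < m0 -> xy < m0 -> env0 x < n ->
  gsp P n adv I A par m0 env0 (CoR x xj xy) (Cval I (env0 x).+1 (env0 xj) (env0 xy)).
Proof.
move=> h1 h2 h3 hx m v env Hm Hv Hag Hok.
have E : forall u, u < N -> H (upd_env env m u) (FAnd (SUCC x m m.+1) (FAux 1 [:: m; xj; xy; v]))
    = (u == (env x).+1) && bitn (Cval I u (env xj) (env xy)) (env v).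
  move=> u uN; rewrite H_and SUCC_sem; [|lia|lia|exact: env_ok_upd].
  rewrite H_aux1; last exact: env_ok_upd.
  by upd_simp.
rewrite /CoR; apply/idP/idP.
  by case/HEx => u uN; rewrite E // (Hag x) // (Hag xj) // (Hag xy) // => /andP [/eqP -> ->].
move=> b; apply/HEx; exists (env0 x).+1; first by rewrite /=; lia.
by rewrite E /= ?(Hag x) ?(Hag xj) ?(Hag xy) ?eqxx //; lia.
Qed.

Lemma Item_sem m0 env0 y2 : y2 < m0 -> n <= env0 y2 ->
  nth 0 par 0 < 2 ^ n -> nth 0 par 1 < 2 ^ n ->
  gsp P n adv I A par m0 env0 (Item y2) (itemv (nth 0 par 0) (nth 0 par 1) (env0 y2 - n)).
Proof.
move=> h1 ny Hp Hw m v env Hm Hv Hag Hok.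
rewrite /Item H_and WLE_sem //; last by rewrite (Hag y2).
rewrite H_par (Hag y2) // /itemv; case: ifP => //= _.
by rewrite /bitn div0n.
lia.
Qed.

Lemma Sg_sem m0 env0 x xi xj y1 y2 y3 :
  x < m0 -> xi < m0 -> xj < m0 -> y1 < m0 -> y2 < m0 -> y3 < m0 -> env0 x < n ->
  n <= env0 y2 -> nth 0 par 0 < 2 ^ n -> nth 0 par 1 < 2 ^ n ->
  gsp P n adv I A par m0 env0 (Sg x xi xj y1 y2 y3)
    (satN N (Cval I (env0 xi) (env0 x) (env0 y1)
             + itemv (nth 0 par 0) (nth 0 par 1) (env0 y2 - n)
             + Cval I (env0 x).+1 (env0 xj) (env0 y3))).
Proof.
move=> h1 h2 h3 h4 h5 h6 hx ny Hp Hw; rewrite -satN_add_l.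
have Hit : itemv (nth 0 par 0) (nth 0 par 1) (env0 y2 - n) < 2 ^ N.
  by rewrite /itemv; case: ifP => _; [exact: pow_nN | exact: expn_gt0].
apply: ADDS_sem; [apply: ADDS_sem| | exact: satN_lt | exact: Cval_lt].
- exact: Cold_sem.
- exact: Item_sem.
- exact: Cval_lt.
- exact: Hit.
- exact: CoR_sem.
Qed.

Section Cnew.
Variables (xo : 'I_n).
Hypotheses (Hp : nth 0 par 0 < 2 ^ n) (Hw : nth 0 par 1 < 2 ^ n).
Local Notation p := (nth 0 par 0).
Local Notation w := (nth 0 par 1).
Local Notation I' := (apply_change (CItem xo p w) I).

Definition Vf i xv j y1 y2 y3 := satN N (Cval I i xv y1 + itemv p w (y2 - n) + Cval I xv.+1 j y3).

Lemma Sg_val env x xi xj a b c base v :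
  x < base -> xi < base -> xj < base -> a < base -> b < base -> c < base -> v < base ->
  env x < n -> n <= env b -> env_ok n adv env ->
  H env (Sg x xi xj a b c base v) = bitn (Vf (env xi) (env x) (env xj) (env a) (env b) (env c)) (env v).
Proof.
move=> h1 h2 h3 h4 h5 h6 hv hx hb Hok.
exact: (Sg_sem (m0 := base) (env0 := env) h1 h2 h3 h4 h5 h6 hx hb Hp Hw (leqnn base) hv (@agree_refl base env) Hok).
Qed.

Lemma satN3 a b c : satN N (satN N a + b + satN N c) = satN N (a + b + c).
Proof. rewrite /satN; lia. Qed.

Definition spl y a b c := [&& n <= a, n <= b, n <= c & (a - n) + (b - n) + (c - n) + n == y].

Lemma Vf_le i xv j y a b c : i <= xv < j -> xv = xo -> n <= y -> spl y a b c ->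
  Vf i xv j a b c <= satN N (opt n I' i j (y - n)).
Proof.
move=> Hr Ex ny /and4P [na nb nc /eqP E].
rewrite /Vf /Cval na nc satN3; apply: satN_mono.
rewrite Ex in Hr *; apply: decomp_le => //; lia.
Qed.

Lemma Vf_ex i xv j y : i <= xv < j -> xv = xo -> n <= y -> y < N ->
  exists a b c, [/\ a < N, b < N, c < N, spl y a b c & Vf i xv j a b c = satN N (opt n I' i j (y - n))].
Proof.
move=> Hr Ex ny yN; rewrite Ex in Hr *.
case: (decomp_ex I p w (y - n) Hr) => b1 [b2 [b3 [Eb Hle]]].
exists (n + b1), (n + b2), (n + b3); split; try lia.
  by rewrite /spl !leq_addr /=; apply/eqP; lia.
rewrite /Vf /Cval !leq_addr !addKn satN3; apply/eqP; rewrite eqn_leq.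
apply/andP; split; apply: satN_mono => //; apply: decomp_le => //; lia.
Qed.

Definition ev3 (env : nat -> nat) m a b c := upd_env (upd_env (upd_env env m a) m.+1 b) m.+2 c.

Lemma Cnew_sem m0 (env0 : nat -> nat) x xi xj xy : x < m0 -> xi < m0 -> xj < m0 -> xy < m0 ->
  env0 x = val xo -> env_ok n adv env0 ->
  gsp P n adv I A par m0 env0 (Cnew x xi xj xy) (Cval I' (env0 xi) (env0 xj) (env0 xy)).
Proof.
move=> h1 h2 h3 h4 Ex Hok0 m v env Hm Hv Hag Hok.
rewrite -(Hag xi) // -(Hag xj) // -(Hag xy) //.
have Ex' : env x = xo by rewrite (Hag x h1).
have hx : env x < n by rewrite Ex'.
have yN := HokN xy Hok.
rewrite /Cnew H_and H_adv0 // H_or H_and INRANGE_sem H_and H_not INRANGE_sem H_aux1 //.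
case: (leqP n (env xy)) => ny; last by rewrite andFb /Cval leqNgt ny /bitn div0n.
rewrite andTb.
case: (boolP (env xi <= env x < env xj)) => Hr; last first.
  by rewrite andFb orFb andTb /Cval ny opt_out // -Ex'.
rewrite andTb andFb orbF.
have Hok3 : forall a b c, a < N -> b < N -> c < N -> env_ok n adv (ev3 env m a b c).
  by move=> a b c aN bN cN; rewrite /ev3; do 3 (apply: env_ok_upd => //).
have Hspl : forall a b c, a < N -> b < N -> c < N ->
    H (ev3 env m a b c) (SPLIT m m.+1 m.+2 xy m.+3) = spl (env xy) a b c.
  move=> a b c aN bN cN; rewrite SPLIT_sem //; try lia; last exact: Hok3.
  by rewrite /ev3; upd_simp.
have HSg : forall a b c, a < N -> b < N -> c < N -> n <= b ->
    H (ev3 env m a b c) (Sg x xi xj m m.+1 m.+2 m.+3 v)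
    = bitn (Vf (env xi) (env x) (env xj) a b c) (env v).
  move=> a b c aN bN cN nb; rewrite Sg_val; try lia; last exact: Hok3.
  - by rewrite /ev3; upd_simp.
  - by rewrite /ev3; upd_simp.
  - by rewrite /ev3; upd_simp.
have Hall : forall a b c, a < N -> b < N -> c < N -> n <= b ->
  reflect (forall a' b' c', a' < N -> b' < N -> c' < N -> spl (env xy) a' b' c' ->
             Vf (env xi) (env x) (env xj) a' b' c' <= Vf (env xi) (env x) (env xj) a b c)
    (H (ev3 env m a b c) (FAll m.+3 (FAll m.+4 (FAll m.+4.+1
       (imp (SPLIT m.+3 m.+4 m.+4.+1 xy m.+4.+2)
            (LE (Sg x xi xj m.+3 m.+4 m.+4.+1) (Sg x xi xj m m.+1 m.+2) m.+4.+2)))))).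
  move=> a b c aN bN cN nb.
  have inner : forall a' b' c', a' < N -> b' < N -> c' < N ->
    H (upd_env (upd_env (upd_env (ev3 env m a b c) m.+3 a') m.+4 b') m.+4.+1 c')
      (imp (SPLIT m.+3 m.+4 m.+4.+1 xy m.+4.+2)
            (LE (Sg x xi xj m.+3 m.+4 m.+4.+1) (Sg x xi xj m m.+1 m.+2) m.+4.+2))
    = spl (env xy) a' b' c' ==> (Vf (env xi) (env x) (env xj) a' b' c' <= Vf (env xi) (env x) (env xj) a b c).
    move=> a' b' c' aN' bN' cN'.
    set env6 := upd_env (upd_env (upd_env (ev3 env m a b c) m.+3 a') m.+4 b') m.+4.+1 c'.
    have Hok6 : env_ok n adv env6 by rewrite /env6; do 3 (apply: env_ok_upd => //); exact: Hok3.
    have E6 : forall u, u < m -> env6 u = env u by move=> u um; rewrite /env6 /ev3; upd_simp.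
    have E6a : [/\ env6 m = a, env6 m.+1 = b, env6 m.+2 = c, env6 m.+3 = a' & env6 m.+4 = b'].
      by rewrite /env6 /ev3; split; upd_simp.
    have E6c : env6 m.+4.+1 = c' by rewrite /env6; upd_simp.
    case: E6a => ea eb ec ea' eb'.
    rewrite H_imp SPLIT_sem //; try lia.
    rewrite ea' eb' E6c (E6 xy) //; last lia.
    rewrite -/(spl (env xy) a' b' c').
    case sp : (spl (env xy) a' b' c'); rewrite ?implyFb ?implyTb //.
    have nb' : n <= b' by case/and4P: sp.
    have hx6 : env6 x < n by rewrite E6 //; lia.
    have G1 := Sg_sem (m0 := m.+4.+2) (env0 := env6) (x := x) (xi := xi) (xj := xj)
       (y1 := m.+3) (y2 := m.+4) (y3 := m.+4.+1) ltac:(lia) ltac:(lia) ltac:(lia) ltac:(lia) ltac:(lia) ltac:(lia) hx6 ltac:(by rewrite eb') Hp Hw.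
    have G2 := Sg_sem (m0 := m.+4.+2) (env0 := env6) (x := x) (xi := xi) (xj := xj)
       (y1 := m) (y2 := m.+1) (y3 := m.+2) ltac:(lia) ltac:(lia) ltac:(lia) ltac:(lia) ltac:(lia) ltac:(lia) hx6 ltac:(by rewrite eb) Hp Hw.
    rewrite (LE_sem G1 G2 (satN_lt _ _) (satN_lt _ _) Hok6 (leqnn _) (fun _ _ => erefl) Hok6).
    rewrite /Vf ea eb ec ea' eb' E6c (E6 xi); last lia.
    rewrite (E6 x); last lia.
    by rewrite (E6 xj); last lia.
  apply: (iffP idP).
    move/HAll => H1 a' b' c' aN' bN' cN' sp.
    move: (H1 a' aN') => /HAll /(_ b' bN') /HAll /(_ c' cN'); rewrite inner // sp; exact.
  move=> H1; apply/HAll => a' aN'; apply/HAll => b' bN'; apply/HAll => c' cN'.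
  rewrite inner //; apply/implyP; exact: H1.
rewrite /ev3 in Hok3 Hspl HSg Hall.
have Rng : env xi <= xo < env xj by rewrite -Ex'.
have ybN : env xy < N := yN.
apply/idP/idP.
  case/HEx => a aN /HEx [b bN] /HEx [c cN].
  rewrite H_and H_and Hspl // => /andP [/andP [sp Al] Sgb].
  have nb : n <= b by case/and4P: sp.
  move: Al => /(Hall a b c aN bN cN nb) Al; rewrite HSg // in Sgb.
  case: (Vf_ex Rng (erefl _) ny ybN) => a0 [b0 [c0 [aN0 bN0 cN0 sp0 E0]]].
  have L1 := Al a0 b0 c0 aN0 bN0 cN0 sp0.
  have L2 := Vf_le Rng (erefl _) ny sp.
  rewrite Ex' in Sgb L1; rewrite /Cval ny.
  have -> : satN N (opt n I' (env xi) (env xj) (env xy - n)) = Vf (env xi) xo (env xj) a b c.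
    apply/eqP; rewrite eqn_leq L2 andbT -E0; exact: L1.
  exact: Sgb.
move=> Hb.
case: (Vf_ex Rng (erefl _) ny ybN) => a0 [b0 [c0 [aN0 bN0 cN0 sp0 E0]]].
have nb0 : n <= b0 by case/and4P: sp0.
apply/HEx; exists a0 => //; apply/HEx; exists b0 => //; apply/HEx; exists c0 => //.
rewrite H_and H_and Hspl // sp0 andTb HSg // Ex' E0.
rewrite /Cval ny in Hb; rewrite Hb andbT.
apply/(Hall a0 b0 c0 aN0 bN0 cN0 nb0) => a' b' c' aN' bN' cN' sp'.
rewrite Ex' E0; exact: Vf_le Rng (erefl _) ny sp'.
Qed.

End Cnew.

End Main.

Definition Binp : nat -> nat -> form := fun _ v => FInp SB [:: v].
Definition Tinp : nat -> nat -> form := fun _ v => FInp ST [:: v].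
Definition Ppar0 : nat -> nat -> form := fun _ v => FPar 0 v.

Definition Qgen (Bg Tg : nat -> nat -> form) (Cg : nat -> nat -> nat -> nat -> nat -> form) (o : nat) :=
  FEx o (FEx o.+1 (FEx o.+2 (FAnd (FAnd (FAnd (ISZERO o o.+3) (ISTOP o.+1 o.+3))
                                        (FAnd (ADV o.+2) (EQNUM Bg o.+2 o.+3)))
                                  (LE Tg (Cg o o.+1 o.+2) o.+3)))).

Definition updf (kd : ckind) (r : nat) : form :=
  match kd with
  | KItem => if r == 0 then Qgen Binp Tinp (Cnew 0) 1 else Cnew 0 1 2 3 5 4
  | KB => if r == 0 then Qgen Ppar0 Tinp Cold 0 else FAux 1 [:: 0; 1; 2; 3]
  | KT => if r == 0 then Qgen Binp Ppar0 Cold 0 else FAux 1 [:: 0; 1; 2; 3]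
  end.

Definition prog := DynProg [:: 0; 4] [:: 1; 2] updf.

Section Q.
Variables (n k : nat) (I : ksinst) (A : nat -> seq nat -> bool) (par : seq nat).
Local Notation adv := (adv_of k).
Local Notation N := (n + k.+1).
Local Notation H := (holds prog n adv I A par).

Lemma Qgen_sem env (Bg Tg : nat -> nat -> form) Cg o Bv Tv I2 :
  (forall m0 env0, gsp prog n adv I A par m0 env0 Bg Bv) ->
  (forall m0 env0, gsp prog n adv I A par m0 env0 Tg Tv) ->
  Bv < 2 ^ n -> Tv < 2 ^ n -> Bv <= k ->
  (forall env', agree o env' env -> env_ok n adv env' ->
     gsp prog n adv I A par o.+3 env' (Cg o o.+1 o.+2) (Cval n k I2 (env' o) (env' o.+1) (env' o.+2))) ->
  env_ok n adv env ->
  H env (Qgen Bg Tg Cg o) = (Tv <= opt n I2 0 (n + k) Bv).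
Proof.
move=> HB HT hB hT Bk HC Hok.
have HPadv : adv_ar prog = [:: 1; 2] by [].
have Hok3 : forall a b c, a < N -> b < N -> c < N -> env_ok n adv (ev3 env o a b c).
  by move=> a b c aN bN cN; rewrite /ev3; do 3 (apply: env_ok_upd => //).
have pN : forall x, x < 2 ^ n -> x < 2 ^ N.
  move=> x h; apply: leq_trans h _; rewrite leq_exp2l //; lia.
have E : forall a b c, a < N -> b < N -> c < N ->
   H (ev3 env o a b c) (FAnd (FAnd (FAnd (ISZERO o o.+3) (ISTOP o.+1 o.+3))
                                        (FAnd (ADV o.+2) (EQNUM Bg o.+2 o.+3)))
                                  (LE Tg (Cg o o.+1 o.+2) o.+3))
   = [&& a == 0, b == n + k, n <= c, Bv == c - n & Tv <= Cval n k I2 a b c].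
  move=> a b c aN bN cN.
  have Ok := Hok3 a b c aN bN cN.
  have Ag : agree o (ev3 env o a b c) env by move=> u uo; rewrite /ev3; upd_simp.
  rewrite !H_and ISZERO_sem; [|lia|done].
  rewrite ISTOP_sem; [|lia|done].
  rewrite H_adv0 //.
  rewrite (EQNUM_sem HPadv (HB _ _)) //; last exact: pN.
  rewrite (LE_sem (HT _ _) (HC _ Ag Ok) (pN _ hT) (Cval_lt _ _ _ _ _ _) Ok (leqnn _) (fun _ _ => erefl) Ok).
  rewrite /ev3; upd_simp.
  by case: (a == 0); case: (b == n + k); case: (n <= c).
rewrite /Qgen; apply/idP/idP.
  case/HEx => a aN /HEx [b bN] /HEx [c cN].
  rewrite -/(ev3 env o a b c) E //.
  case/and5P => /eqP -> /eqP -> nc /eqP EB.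
  rewrite /Cval nc -EB => HTv; apply: leq_trans HTv _; rewrite /satN; lia.
move=> HTv; apply/HEx; exists 0; first by rewrite /=; lia.
apply/HEx; exists (n + k); first by rewrite /=; lia.
apply/HEx; exists (n + Bv); first by rewrite /=; lia.
rewrite -/(ev3 env o 0 (n + k) (n + Bv)) E /=; try lia.
rewrite !eqxx leq_addr addKn eqxx /Cval leq_addr addKn /=.
rewrite /satN; have := pow_gt0 N; have : Tv < 2 ^ N by exact: pN.
have : 2 ^ n < 2 ^ N by rewrite ltn_exp2l //; lia.
lia.
Qed.

End Q.

Section Inv.
Variables (n k : nat).
Local Notation adv := (adv_of k).
Local Notation N := (n + k.+1).

Definition bounds (I : ksinst) :=
  [/\ forall t, ks_p I t < 2 ^ n, forall t, ks_w I t < 2 ^ n, ks_B I < 2 ^ n & ks_T I < 2 ^ n].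

Definition Inv (st : pstate) (I : ksinst) :=
  [/\ st.1 = I, bounds I &
      forall i j y q, i < N -> j < N -> y < N -> q < N ->
        st.2 1 [:: i; j; y; q] = bitn (Cval n k I i j y) q].

Lemma bounds_step I (c : change n) : bounds I -> valid_change c -> bounds (apply_change c I).
Proof.
case=> Hp Hw HB HT; case: c => [i p w /andP [hp hw]|b hb|t ht] /=; split => //= t';
  by case: ifP.
Qed.

Lemma Inv0 : Inv (ks_empty, empty_aux) ks_empty.
Proof.
split => //; first by split => //= *; exact: expn_gt0.
move=> i j y q _ _ _ _; rewrite /Cval opt_empty /empty_aux.
by case: ifP => _; rewrite /satN ?min0n /bitn ?div0n.
Qed.

Lemma step_aux st (c : change n) r vs : (@step prog n adv st c).2 r vs =
  [&& r < 2, size vs == nth 0 [:: 0; 4] r, all (fun v => v < N) vs &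
      holds prog n adv st.1 st.2 (change_nums c) (fun x => nth 0 (change_elems c ++ vs) x)
        (updf (change_kind c) r)].
Proof. by []. Qed.

Lemma step_aux1 st (c : change n) vs : size vs = 4 -> all (fun v => v < N) vs ->
  (@step prog n adv st c).2 1 vs =
      holds prog n adv st.1 st.2 (change_nums c) (fun x => nth 0 (change_elems c ++ vs) x)
        (updf (change_kind c) 1).
Proof. by move=> Hs Ha; rewrite step_aux Hs Ha. Qed.

Lemma step_aux0 st (c : change n) :
  query_rel (@step prog n adv st c) =
      holds prog n adv st.1 st.2 (change_nums c) (fun x => nth 0 (change_elems c ++ [::]) x)
        (updf (change_kind c) 0).
Proof. by rewrite /query_rel step_aux. Qed.

Lemma env_ok_nth s : all (fun v => v < N) s -> env_ok n adv (fun x => nth 0 s x).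
Proof.
move=> Hs u; case: (ltnP u (size s)) => hu.
  by move/allP: Hs; apply; exact: mem_nth.
by rewrite nth_default //= addnS.
Qed.

Lemma Inv_step st I (c : change n) : Inv st I -> valid_change c ->
  Inv (@step prog n adv st c) (apply_change c I).
Proof.
case=> E1 Hb HA Hv; split; first by rewrite /step /= E1.
  exact: bounds_step.
move=> i j y q iN jN yN qN.
have Hall : all (fun v => v < N) [:: i; j; y; q] by rewrite /= iN jN yN qN.
rewrite step_aux1 //.
rewrite -E1 in HA.
case: Hb => Hp Hw HB HT.
case: c Hv => [xo p w /andP [hp hw]|b hb|t ht].
- have Ok : env_ok n adv (fun x => nth 0 ([:: val xo] ++ [:: i; j; y; q]) x).
    by apply: env_ok_nth; rewrite /= iN jN yN qN (leq_trans (ltn_ord xo)) //; lia.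
  have G := Cnew_sem (P := prog) (par := [:: p; w]) (erefl _) (erefl _) HA (xo := xo) hp hw
    (m0 := 4) (env0 := fun x => nth 0 ([:: val xo] ++ [:: i; j; y; q]) x)
    (x := 0) (xi := 1) (xj := 2) (xy := 3) isT isT isT isT (erefl _) Ok.
  rewrite -E1 (G 5 4 _ isT isT (fun _ _ => erefl) Ok).
  done.
- have Ok : env_ok n adv (fun x => nth 0 ([::] ++ [:: i; j; y; q]) x).
    by apply: env_ok_nth; rewrite /= iN jN yN qN.
  by rewrite -E1 (H_aux1 (P := prog) _ (erefl _) HA 0 1 2 3 Ok).
- have Ok : env_ok n adv (fun x => nth 0 ([::] ++ [:: i; j; y; q]) x).
    by apply: env_ok_nth; rewrite /= iN jN yN qN.
  by rewrite -E1 (H_aux1 (P := prog) _ (erefl _) HA 0 1 2 3 Ok).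
Qed.

Lemma query_step st I (c : change n) : Inv st I -> valid_change c ->
  ks_B (apply_change c I) <= k ->
  query_rel (@step prog n adv st c) = knapsack n (apply_change c I).
Proof.
case=> E1 Hb HA Hv HBk.
rewrite step_aux0 (@knap_opt n _ (n + k)) ?leq_addr //.
rewrite E1 in HA *.
case: Hb => Hp Hw HB HT.
have HBinp : forall par m0 env0, gsp prog n adv I st.2 par m0 env0 Binp (ks_B I).
  move=> par m0 env0 m r env _ _ _ _; rewrite /Binp /=.
  case: ltnP => //= h; apply/esym; exact: bitn_big HB h.
have HTinp : forall par m0 env0, gsp prog n adv I st.2 par m0 env0 Tinp (ks_T I).
  move=> par m0 env0 m r env _ _ _ _; rewrite /Tinp /=.
  case: ltnP => //= h; apply/esym; exact: bitn_big HT h.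
have HPar : forall par m0 env0, gsp prog n adv I st.2 par m0 env0 Ppar0 (nth 0 par 0) by [].
have HColdg : forall par env', gsp prog n adv I st.2 par 3 env' (Cold 0 1 2)
    (Cval n k I (env' 0) (env' 1) (env' 2)).
  move=> par env'; exact: (Cold_sem (P := prog) par (erefl _) HA (m0 := 3) (env0 := env') (xi := 0) (xj := 1) (xy := 2) isT isT isT).
case: c Hv HBk => [xo p w /andP [hp hw]|b hb|t ht] HBk.
- have Ok : env_ok n adv (fun x => nth 0 ([:: val xo] ++ [::]) x).
    by apply: env_ok_nth; rewrite /= andbT (leq_trans (ltn_ord xo)) //; lia.
  apply: (Qgen_sem (o := 1) (HBinp _) (HTinp _) HB HT HBk _ Ok) => env' Ag Ok'.
  have E0 : env' 0 = val xo by rewrite (Ag 0 isT).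
  exact: (Cnew_sem (P := prog) (par := [:: p; w]) (erefl _) (erefl _) HA (xo := xo) hp hw
    (m0 := 4) (env0 := env') (x := 0) (xi := 1) (xj := 2) (xy := 3) isT isT isT isT E0 Ok').
- have Ok : env_ok n adv (fun x => nth 0 ([::] ++ [::]) x).
    by apply: env_ok_nth.
  have Q := (Qgen_sem (o := 0) (Tv := ks_T I) (Bv := b) (HPar [:: b]) (HTinp [:: b]) hb HT HBk (fun env' _ _ => HColdg [:: b] env') Ok).
  exact Q.
- have Ok : env_ok n adv (fun x => nth 0 ([::] ++ [::]) x).
    by apply: env_ok_nth.
  have Q := (Qgen_sem (o := 0) (Tv := t) (Bv := ks_B I) (HBinp [:: t]) (HPar [:: t]) HB ht HBk (fun env' _ _ => HColdg [:: t] env') Ok).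
  exact Q.
Qed.

End Inv.

Lemma run_inv n k (cs : seq (change n)) : all (@valid_change n) cs ->
  Inv n k (@run prog n (adv_of k) cs) (run_input cs).
Proof.
elim/last_ind: cs => [|cs c IH]; first by move=> _; exact: Inv0.
rewrite all_rcons => /andP [hc hcs].
rewrite /run /run_input !foldl_rcons.
exact: Inv_step (IH hcs) hc.
Qed.

Definition c0 := RComp lec [:: RProj 1; RProj 0].
Definition c1 := RComp mulc [:: RComp mulc [:: RComp lec [:: RProj 1; RProj 0];
                                              RComp lec [:: RProj 2; RProj 0]];
                               RComp bitc [:: RProj 1; RProj 2]].

Lemma natb_and (a b : bool) : nat_of_bool (a && b) = a * b.
Proof. by case: a; case: b. Qed.

Theorem proposition16 : knapsack_in_ParaSD.
Proof.
exists (fun k => k.+1); split; first by exists RSucc => x; exact: ev_succ.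
exists prog, adv_of; split.
- by [].
- split; first by exists RSucc => x; exact: ev_succ.
  case=> [|[|r]] // _.
  + exists c0 => k0 [|a [|? ?]] //= _.
    rewrite !andbT ?ltnS; apply: ev_comp2; [exact: ev_proj1 | exact: ev_proj0 | exact: ev_le].
  + exists c1 => k0 [|a [|j [|? ?]]] //= _.
    rewrite ?andbT ?ltnS natb_and natb_and.
    apply: ev_comp2; [apply: ev_comp2 | | exact: ev_mul].
    * apply: ev_comp2; [exact: ev_proj1 | exact: ev_proj0 | exact: ev_le].
    * apply: ev_comp2; [exact: ev_proj2 | exact: ev_proj0 | exact: ev_le].
    * exact: ev_mul.
    * apply: ev_comp2; [exact: ev_proj1 | exact: ev_proj2 | exact: ev_bit].
- by move=> k.
- move=> n kmax cs Hne Hval Hbd.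
  case/lastP: cs Hne Hval Hbd => [//|cs c] _ Hval Hbd.
  move: (Hval); rewrite all_rcons => /andP [hc hcs].
  rewrite /run /run_input !foldl_rcons.
  apply: query_step (run_inv kmax hcs) hc _.
  have := Hbd (size (rcons cs c)) (leqnn _); rewrite take_size /ks_param /run_input foldl_rcons.
  done.
Qed.
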